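(* Under the setting below, every vertex of $G_{15}$ has degree at most $15$.
   Context: Setting: $V$ is a finite set of points (vertices) in the plane and $S$ a finite set of simple polygonal obstacles, pairwise non-intersecting, all of whose corners lie in $V$; each vertex is a corner of at most one obstacle and occurs at most once on its boundary. General position: no three vertices collinear and no two vertices on a line parallel to a cone boundary ray. Points $p,q$ are visible if segment $pq$ does not properly intersect any obstacle (touching at vertices or running along boundaries is allowed, meeting an obstacle interior is not). Cones: around each vertex $u$ the plane is partitioned into six cones of angle $\pi/3$ with apex $u$; $C_0^u$ has the upward vertical bisector, and counterclockwise the cones are $C_0^u,\overline{C_2^u},C_1^u,\overline{C_0^u},C_2^u,\overline{C_1^u}$ (positive cones $C_i$, negative cones $\overline{C_i}$, indices mod 3). If the obstacle having $u$ as a corner splits a cone so that there are vertices visible from $u$ on both sides of the obstacle within it, the cone is regarded as two subcones; otherwise a single subcone. $G_\infty$: for every vertex $u$ and every positive subcone of $u$, add an edge from $u$ to the vertex visible from $u$ in that subcone whose orthogonal projection onto the cone's bisector is closest to $u$. $G_{15}$ is obtained from $G_\infty$ by, for every vertex $u$ and every negative subcone of $u$, deleting all edges of $G_\infty$ incident to $u$ that lie in that subcone except the leftmost one (clockwise extreme as seen from $u$), the rightmost one (counterclockwise extreme), and the one to the closest vertex (smallest projection onto the cone's bisector). *)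

(* Defs.v *)
(* points of the plane are pairs of elements of a real
   closed field R (we need sqrt 3 for the cone directions). *)
From mathcomp Require Import all_boot all_order all_algebra.
Set Implicit Arguments. Unset Strict Implicit. Unset Printing Implicit Defensive.
Import Order.TTheory GRing.Theory Num.Theory.
Local Open Scope ring_scope.

Section Geom.
Variable R : rcfType.

Definition pt := (R * R)%type.

Definition psub (p q : pt) : pt := (p.1 - q.1, p.2 - q.2).
Definition padd (p q : pt) : pt := (p.1 + q.1, p.2 + q.2).
Definition pscale (t : R) (p : pt) : pt := (t * p.1, t * p.2).
Definition dot (p q : pt) : R := p.1 * q.1 + p.2 * q.2.
(* cross p q > 0  iff  q is counterclockwise from p *)
Definition cross (p q : pt) : R := p.1 * q.2 - p.2 * q.1.

Definition on_seg (a b z : pt) : Prop :=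
  exists t : R, 0 <= t <= 1 /\ z = padd a (pscale t (psub b a)).

(* A polygon is the cyclic sequence of its corners; edge i joins corner i to
   corner i+1 (mod n). *)
Definition corner (P : seq pt) (i : nat) : pt := nth (0, 0) P (i %% size P).
Definition pedges (P : seq pt) : seq (pt * pt) := zip P (rot 1 P).

Definition on_boundary (P : seq pt) (z : pt) : Prop :=
  exists2 e, e \in pedges P & on_seg e.1 e.2 z.

(* even-odd rule: number of crossings of the horizontal ray from z to the
   right with the boundary of P *)
Definition ray_crosses (z : pt) (e : pt * pt) : bool :=
  let a := e.1 in let b := e.2 in
  ((z.2 < a.2) != (z.2 < b.2)) &&
  (z.1 < a.1 + (z.2 - a.2) * (b.1 - a.1) / (b.2 - a.2)).

Definition poly_interior (P : seq pt) (z : pt) : Prop :=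
  ~ on_boundary P z /\ odd (count (ray_crosses z) (pedges P)).

Definition poly_region (P : seq pt) (z : pt) : Prop :=
  on_boundary P z \/ poly_interior P z.

Definition simple_polygon (P : seq pt) : Prop :=
  let n := size P in
  (3 <= n)%N /\ uniq P /\
  forall i j : nat, (i < j)%N -> (j < n)%N ->
    forall z, on_seg (corner P i) (corner P i.+1) z ->
              on_seg (corner P j) (corner P j.+1) z ->
      (j = i.+1 /\ z = corner P j) \/ (i = 0%N /\ j = n.-1 /\ z = corner P 0).

Definition collinear (a b c : pt) : Prop := cross (psub b a) (psub c a) = 0.

Definition s3 : R := Num.sqrt 3.

Definition setting (V : seq pt) (S : seq (seq pt)) : Prop :=
  [/\ uniq V,
      (forall O, O \in S -> simple_polygon O /\ {subset O <= V}),
      (forall i j : nat, (i < j)%N -> (j < size S)%N ->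
         forall z, ~ (poly_region (nth [::] S i) z /\ poly_region (nth [::] S j) z)),
      (* each vertex is a corner of at most one obstacle, at most once *)
      uniq (flatten S) &
      ((forall a b c, a \in V -> b \in V -> c \in V ->
         a != b -> b != c -> a != c -> ~ collinear a b c) /\
      (* no two vertices on a line parallel to a cone boundary ray
         (boundary directions: 0, 60 and 120 degrees) *)
      (forall a b, a \in V -> b \in V -> a != b ->
         let d := psub b a in
         [/\ d.2 != 0, d.2 != s3 * d.1 & d.2 != - (s3 * d.1)]))].

Definition visible (S : seq (seq pt)) (p q : pt) : Prop :=
  forall O, O \in S -> forall t : R, 0 <= t <= 1 ->
    ~ poly_interior O (padd p (pscale t (psub q p))).

(* The six cones around an apex are indexed counterclockwise by k = 0..5:
   0 : C_0, 1 : \bar C_2, 2 : C_1, 3 : \bar C_0, 4 : C_2, 5 : \bar C_1.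
   Cone k has angular range [60+60k, 120+60k] degrees and its bisector is
   the unit vector at angle 90+60k degrees. *)
Definition bisector (k : nat) : pt :=
  match k with
  | 0 => (0, 1)
  | 1 => (- (s3 / 2), 1 / 2)
  | 2 => (- (s3 / 2), - (1 / 2))
  | 3 => (0, -1)
  | 4 => (s3 / 2, - (1 / 2))
  | _ => (s3 / 2, 1 / 2)
  end.

(* d lies in the closed cone k: angle between d and bisector at most 30 deg *)
Definition in_cone (k : nat) (d : pt) : bool :=
  (0 < dot d (bisector k)) && (3 * dot d d <= 4 * (dot d (bisector k)) ^+ 2).

Definition cone_idx (u v : pt) : nat :=
  find (fun k => in_cone k (psub v u)) (iota 0 6).

Definition positive_cone (k : nat) : bool := ~~ odd k.

Definition proj (u : pt) (k : nat) (v : pt) : R := dot (psub v u) (bisector k).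

(* v and w (vertices seen from apex u) lie in the same subcone of u:
   same cone, and the obstacle having u as a corner does not enter the
   angular sector between the rays uv and uw (otherwise that obstacle splits
   the cone, and v, w lie on different sides of it). *)
Definition same_subcone (S : seq (seq pt)) (u v w : pt) : Prop :=
  cone_idx u v = cone_idx u w /\
  ~ (exists O, [/\ O \in S, u \in O &
       exists s t : R, [/\ 0 <= s, 0 <= t &
         exists2 eps : R, 0 < eps & forall r : R, 0 < r <= eps ->
           poly_interior O
             (padd u (pscale r (padd (pscale s (psub v u)) (pscale t (psub w u)))))]]).

Definition Ginf_adds (V : seq pt) (S : seq (seq pt)) (u v : pt) : Prop :=
  [/\ u \in V, v \in V, v != u, visible S u v /\
      positive_cone (cone_idx u v) &
      forall w, w \in V -> w != u -> visible S u w -> same_subcone S u v w ->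
        proj u (cone_idx u v) v <= proj u (cone_idx u v) w].

Definition Ginf_edge V S (u v : pt) : Prop := Ginf_adds V S u v \/ Ginf_adds V S v u.

(* the edge uv of G_infinity survives the pruning step performed at u:
   either v is not in a negative cone of u, or v is the leftmost
   (clockwise extreme), rightmost (counterclockwise extreme) or closest
   G_infinity-neighbour of u in the subcone of u containing v *)
Definition kept_at V S (u v : pt) : Prop :=
  positive_cone (cone_idx u v) \/
  let N := fun z => Ginf_edge V S u z /\ same_subcone S u v z in
  [\/ (forall z, N z -> 0 <= cross (psub v u) (psub z u)),
      (forall z, N z -> cross (psub v u) (psub z u) <= 0) |
      (forall z, N z -> proj u (cone_idx u v) v <= proj u (cone_idx u v) z)].

Definition G15_edge V S (u v : pt) : Prop :=
  [/\ Ginf_edge V S u v, kept_at V S u v & kept_at V S v u].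

End Geom.

(* Main.v *)
Require Import Defs.
From Stdlib Require Import Classical.
From mathcomp Require Import all_boot all_order all_algebra.
From mathcomp Require Import ring lra zify.
Import Order.TTheory GRing.Theory Num.Theory.
Local Open Scope ring_scope.
Set Implicit Arguments. Unset Strict Implicit.

Section Arc.
Variable R : rcfType.


Lemma ray_sign (a1 a2 d1 d2 : R) : a2 != 0 -> a1 * d2 - a2 * d1 = 0 ->
  a1 * d1 + a2 * d2 < 0 -> a2 * d2 < 0.
Proof.
move=> ha hc hd.
have e : (a2 * d2) * (a1 ^+ 2 + a2 ^+ 2) = a2 ^+ 2 * (a1 * d1 + a2 * d2) + (a1 * a2) * (a1 * d2 - a2 * d1) by ring.
rewrite hc mulr0 addr0 in e.
have h2 : 0 < a2 ^+ 2 by case: (ltrgtP 0 a2) ha => // h _; nra.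
have h3 : a2 ^+ 2 * (a1 * d1 + a2 * d2) < 0 by rewrite pmulr_rlt0.
have h4 : 0 < a1 ^+ 2 + a2 ^+ 2 by nra.
rewrite -e in h3. by rewrite pmulr_llt0 in h3.
Qed.

Lemma arc_core (a1 a2 b1 b2 d1 d2 : R) :
  a2 != 0 -> b2 != 0 -> a1 * b2 - a2 * b1 != 0 ->
  ~~ ((a1 * d2 - a2 * d1 == 0) && (0 <= a1 * d1 + a2 * d2)) ->
  ~~ ((b1 * d2 - b2 * d1 == 0) && (0 <= b1 * d1 + b2 * d2)) ->
  (((d2 < 0) != (0 < a2)) && (if 0 < a2 then 0 < a1 * d2 - a2 * d1 else a1 * d2 - a2 * d1 < 0))
  (+)
  (((d2 < 0) != (0 < b2)) && (if 0 < b2 then 0 < b1 * d2 - b2 * d1 else b1 * d2 - b2 * d1 < 0))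
  = (if 0 < a1 * b2 - a2 * b1 then (0 < a1 * d2 - a2 * d1) && (0 < d1 * b2 - d2 * b1)
     else (a1 * d2 - a2 * d1 < 0) && (d1 * b2 - d2 * b1 < 0))
    (+) (((0 < a2) != (0 < b2)) && ((0 < a1 * b2 - a2 * b1) == (0 < b2))).
Proof.
have E: d1 * b2 - d2 * b1 = - (b1 * d2 - b2 * d1) by ring.
rewrite E oppr_gt0 oppr_lt0.
move=> ha hb hab h1 h2.
have ha' := ha; have hb' := hb.
rewrite negb_and -ltNge in h1; rewrite negb_and -ltNge in h2.
move: h1 h2.
case: (ltrgtP 0 a2) ha' => // ha' _;
case: (ltrgtP 0 b2) hb' => // hb' _;
case: (ltrgtP 0 (a1 * b2 - a2 * b1)) hab => // hab _;
case: (ltrgtP 0 d2) => hd;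
case: (ltrgtP 0 (a1 * d2 - a2 * d1)) => hx;
case: (ltrgtP 0 (b1 * d2 - b2 * d1)) => hy //= h1 h2;
  try by [].
all: try (exfalso; (try have ? := @ray_sign _ _ _ _ ha (esym hx) ltac:(assumption)); (try have ? := @ray_sign _ _ _ _ hb (esym hy) ltac:(assumption)); nra).
Qed.

End Arc.

Section Arc2.
Variable R : rcfType.
Lemma rayA_iff (a1 a2 b1 b2 d1 d2 : R) : a1 * d2 - a2 * d1 = 0 ->
  a1 * b2 - a2 * b1 != 0 ->
  (0 <= a1 * d1 + a2 * d2) = (0 <= (a1 * b2 - a2 * b1) * (d1 * b2 - d2 * b1)).
Proof.
move=> hc hab.
have e : (a1 * d1 + a2 * d2) * (a1 * b2 - a2 * b1) =
  (a1 ^+ 2 + a2 ^+ 2) * (d1 * b2 - d2 * b1) + (a1 * b1 + a2 * b2) * (a1 * d2 - a2 * d1) by ring.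
rewrite hc mulr0 addr0 in e.
have hA : 0 < a1 ^+ 2 + a2 ^+ 2.
  case: (ltrgtP 0 a1) => h1; first nra; last first.
    case: (ltrgtP 0 a2) => h2; [nra|nra|]. by rewrite -h1 -h2 !mul0r subrr eqxx in hab.
  nra.
have hsq : 0 < (a1 * b2 - a2 * b1) ^+ 2.
  case: (ltrgtP 0 (a1 * b2 - a2 * b1)) hab => // h _; nra.
have e2 : (a1 * d1 + a2 * d2) * (a1 * b2 - a2 * b1) ^+ 2 =
  (a1 ^+ 2 + a2 ^+ 2) * ((a1 * b2 - a2 * b1) * (d1 * b2 - d2 * b1)).
  by rewrite expr2 mulrA e; ring.
by rewrite -(pmulr_lge0 _ hsq) e2 pmulr_rge0.
Qed.


Lemma rayB_iff (a1 a2 b1 b2 d1 d2 : R) : d1 * b2 - d2 * b1 = 0 ->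
  a1 * b2 - a2 * b1 != 0 ->
  (0 <= b1 * d1 + b2 * d2) = (0 <= (a1 * b2 - a2 * b1) * (a1 * d2 - a2 * d1)).
Proof.
move=> hc hab.
have hc' : b1 * d2 - b2 * d1 = 0.
  have -> : b1 * d2 - b2 * d1 = - (d1 * b2 - d2 * b1) by ring.
  by rewrite hc oppr0.
have hba : b1 * a2 - b2 * a1 != 0 by rewrite -oppr_eq0; move: hab; apply: contraNneq => <-; apply/eqP; ring.
rewrite (rayA_iff hc' hba).
congr (0 <= _); ring.
Qed.

Lemma cc_core (a1 a2 b1 b2 d1 d2 : R) : a1 * b2 - a2 * b1 != 0 ->
  (if 0 < a1 * b2 - a2 * b1 then (0 <= a1 * d2 - a2 * d1) && (0 <= d1 * b2 - d2 * b1)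
   else (a1 * d2 - a2 * d1 <= 0) && (d1 * b2 - d2 * b1 <= 0)) =
  [|| (if 0 < a1 * b2 - a2 * b1 then (0 < a1 * d2 - a2 * d1) && (0 < d1 * b2 - d2 * b1)
       else (a1 * d2 - a2 * d1 < 0) && (d1 * b2 - d2 * b1 < 0)),
      (a1 * d2 - a2 * d1 == 0) && (0 <= a1 * d1 + a2 * d2) |
      (b1 * d2 - b2 * d1 == 0) && (0 <= b1 * d1 + b2 * d2)].
Proof.
move=> hab.
have E : b1 * d2 - b2 * d1 = - (d1 * b2 - d2 * b1) by ring.
rewrite E oppr_eq0.
have hab' := hab.
case: (ltrgtP 0 (a1 * b2 - a2 * b1)) hab' => // hs _;
case: (ltrgtP 0 (a1 * d2 - a2 * d1)) => hx;
case: (ltrgtP 0 (d1 * b2 - d2 * b1)) => hy /=;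
  try by [].
all: try rewrite (rayA_iff (esym hx) hab).
all: try rewrite (rayB_iff (esym hy) hab).
all: rewrite ?orbF.
all: first [ by symmetry; apply/idP; nra | by symmetry; apply/negbTE; rewrite -ltNge; nra | by symmetry; apply/orP; left; nra ].
Qed.


Lemma arc_bool (a1 a2 b1 b2 d1 d2 : R) (c0 : bool) :
  a2 != 0 -> b2 != 0 -> a1 * b2 - a2 * b1 != 0 ->
  ~~ (((a1 * d2 - a2 * d1 == 0) && (0 <= a1 * d1 + a2 * d2)) ||
      ((b1 * d2 - b2 * d1 == 0) && (0 <= b1 * d1 + b2 * d2))) &&
  (c0 (+) (((d2 < 0) != (0 < a2)) && (if 0 < a2 then 0 < a1 * d2 - a2 * d1 else a1 * d2 - a2 * d1 < 0))
   (+) (((d2 < 0) != (0 < b2)) && (if 0 < b2 then 0 < b1 * d2 - b2 * d1 else b1 * d2 - b2 * d1 < 0)))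
  = if ~~ (c0 (+) (((0 < a2) != (0 < b2)) && ((0 < a1 * b2 - a2 * b1) == (0 < b2))))
    then (if 0 < a1 * b2 - a2 * b1 then (0 < a1 * d2 - a2 * d1) && (0 < d1 * b2 - d2 * b1)
          else (a1 * d2 - a2 * d1 < 0) && (d1 * b2 - d2 * b1 < 0))
    else ~~ (if 0 < a1 * b2 - a2 * b1 then (0 <= a1 * d2 - a2 * d1) && (0 <= d1 * b2 - d2 * b1)
             else (a1 * d2 - a2 * d1 <= 0) && (d1 * b2 - d2 * b1 <= 0)).
Proof.
move=> ha hb hab.
rewrite (cc_core d1 d2 hab).
set R1 := (_ && (0 <= a1 * d1 + a2 * d2)).
set R2 := (_ && (0 <= b1 * d1 + b2 * d2)).
set Cv := (if 0 < a1 * b2 - a2 * b1 then _ else _).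
set ka := (((0 < a2) != (0 < b2)) && _).
case hR: (R1 || R2).
- have hCv : Cv = false.
    case/orP: hR; rewrite /R1 /R2 /Cv.
    + case/andP => /eqP -> _; rewrite ltxx /=; by do ?case: ifP; rewrite ?andbF.
    + case/andP => /eqP h _.
      have -> : d1 * b2 - d2 * b1 = 0.
        have -> : d1 * b2 - d2 * b1 = - (b1 * d2 - b2 * d1) by ring.
        by rewrite h oppr0.
      rewrite ltxx andbF; by do ?case: ifP; rewrite ?andbF.
  rewrite /= hCv /=; by case: (~~ _).
- have := @arc_core R a1 a2 b1 b2 d1 d2 ha hb hab.
  rewrite -/R1 -/R2.
  move: hR => /norP [-> ->] /(_ isT isT).
  rewrite -addbA => ->.
  rewrite orbF /=.
  rewrite -/Cv -/ka. by case: c0; case: Cv; case: ka.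
Qed.

End Arc2.

Section Geo1.
Variable R : rcfType.

Definition ev (P : R -> Prop) := exists2 eps : R, 0 < eps & forall r, 0 < r -> r <= eps -> P r.

Lemma ev_true (P : R -> Prop) : (forall r, 0 < r -> P r) -> ev P.
Proof. by move=> H; exists 1 => // r r0 _; apply: H. Qed.

Lemma ev_and (P Q : R -> Prop) : ev P -> ev Q -> ev (fun r => P r /\ Q r).
Proof.
case=> e1 e10 H1 [e2 e20 H2]; exists (Num.min e1 e2); first by rewrite lt_min e10.
by move=> r r0; rewrite le_min => /andP[h1 h2]; split; [apply: H1|apply: H2].
Qed.

Lemma ev_mono (P Q : R -> Prop) : ev P -> (forall r, 0 < r -> P r -> Q r) -> ev Q.
Proof. by case=> e e0 H HPQ; exists e => // r r0 re; apply: HPQ => //; apply: H. Qed.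

Lemma ev_const (p : Prop) : ev (fun _ => p) -> p.
Proof. by case=> e e0 H; apply: (H e). Qed.

Lemma ev_all (T : eqType) (s : seq T) (P : T -> R -> Prop) :
  (forall x, x \in s -> ev (P x)) -> ev (fun r => forall x, x \in s -> P x r).
Proof.
elim: s => [|y s IH] H; first by apply: ev_true => r _ x.
have := ev_and (H y (mem_head _ _)) (IH (fun x xs => H x (@mem_behead _ (y :: s) x xs))).
move=> hh; apply: (ev_mono hh) => r _ [Hy Hs] x; rewrite inE => /orP[/eqP->|]//; exact: Hs.
Qed.

Lemma ev_sign (f : R -> R) (g0 g1 : R) : (forall r, f r = g0 + r * g1) -> g0 != 0 ->
  ev (fun r => (0 < f r) = (0 < g0) /\ (f r < 0) = (g0 < 0)).
Proof.
move=> Hf Hg0.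
have hn : 0 < `|g0| by rewrite normr_gt0.
have hd : 0 < `|g1| + 1 by rewrite ltr_wpDl.
exists (`|g0| / (`|g1| + 1)); first by rewrite divr_gt0.
move=> r r0; rewrite ler_pdivlMr // => hr.
have /andP[h1 h2] : - `|g1| <= g1 <= `|g1| by rewrite -ler_norml.
rewrite Hf.
have k1 : 0 <= r * (g1 + `|g1|) by apply: mulr_ge0; lra.
have k2 : 0 <= r * (`|g1| - g1) by apply: mulr_ge0; lra.
case: (ltrgtP 0 g0) Hg0 => // hg _.
- rewrite (gtr0_norm hg) in hr.
  have : 0 < g0 + r * g1 by nra.
  by move=> h; split; [rewrite h|rewrite ltNge (ltW h)].
- rewrite (ltr0_norm hg) in hr.
  have : g0 + r * g1 < 0 by nra.
  by move=> h; split; [rewrite ltNge (ltW h)|rewrite h].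
Qed.

Lemma ev_sign1 (f : R -> R) (g0 g1 : R) : (forall r, f r = g0 + r * g1) -> g0 != 0 ->
  ev (fun r => (0 < f r) = (0 < g0)).
Proof. by move=> Hf Hg; apply: (ev_mono (ev_sign Hf Hg)) => r _ []. Qed.

Lemma ev_neq0 (f : R -> R) (g0 g1 : R) : (forall r, f r = g0 + r * g1) -> g0 != 0 ->
  ev (fun r => f r != 0).
Proof.
move=> Hf Hg; apply: (ev_mono (ev_sign Hf Hg)) => r _ [h1 h2].
case: (ltrgtP 0 g0) Hg => // hg _.
- by rewrite gt_eqF // h1.
- by rewrite lt_eqF // h2.
Qed.

Lemma divcmp (A1 A2 d1 d2 : R) : A2 != 0 ->
  (d1 < d2 * A1 / A2) = (if 0 < A2 then 0 < A1 * d2 - A2 * d1 else A1 * d2 - A2 * d1 < 0).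
Proof.
move=> hA; case: (ltrgtP 0 A2) hA => // h _.
- rewrite ltr_pdivlMr // subr_gt0; congr (_ < _); ring.
- rewrite ltr_ndivlMr // subr_lt0; congr (_ < _); ring.
Qed.

Lemma take_zip (S T : Type) (s : seq S) (t : seq T) n :
  take n (zip s t) = zip (take n s) (take n t).
Proof. by elim: s t n => [|x s IH] [|y t] [|n] //=; rewrite IH. Qed.

Lemma drop_zip (S T : Type) (s : seq S) (t : seq T) n :
  drop n (zip s t) = zip (drop n s) (drop n t).
Proof.
elim: s t n => [|x s IH] [|y t] [|n] //=; try exact: IH; by case: (drop _ _).
Qed.

Lemma rot_zip (S T : Type) (s : seq S) (t : seq T) n : size s = size t ->
  rot n (zip s t) = zip (rot n s) (rot n t).
Proof.
move=> hs; rewrite /rot drop_zip take_zip zip_cat //.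
by rewrite !size_drop hs.
Qed.

Lemma pedges_rot (P : seq (pt R)) n : pedges (rot n P) = rot n (pedges P).
Proof.
by rewrite /pedges rot_zip ?size_rot // rot_rot.
Qed.

Lemma count_rot (T : Type) (a : pred T) (s : seq T) n : count a (rot n s) = count a s.
Proof. by rewrite /rot count_cat addnC -count_cat cat_take_drop. Qed.

Lemma interior_rot (P : seq (pt R)) n z : poly_interior (rot n P) z <-> poly_interior P z.
Proof.
rewrite /poly_interior /on_boundary pedges_rot count_rot.
split=> [[h1 h2]|[h1 h2]]; split => //.
- by case=> e; rewrite -(mem_rot n) => he hs; apply: h1; exists e.
- by case=> e; rewrite mem_rot => he hs; apply: h1; exists e.
Qed.

End Geo1.

Section Geo2.
Variable R : rcfType.
Implicit Types (u a b p q d : pt R).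

Definition genpos (V : seq (pt R)) :=
  (forall a b c, a \in V -> b \in V -> c \in V ->
         a != b -> b != c -> a != c -> ~ collinear a b c) /\
      (forall a b, a \in V -> b \in V -> a != b ->
         let d := psub b a in
         [/\ d.2 != 0, d.2 != s3 R * d.1 & d.2 != - (s3 R * d.1)]).

Lemma gp_y V p q : genpos V -> p \in V -> q \in V -> p != q -> q.2 - p.2 != 0.
Proof. by case=> _ H hp hq hpq; case: (H p q hp hq hpq). Qed.

Lemma gp_col V p q c : genpos V -> p \in V -> q \in V -> c \in V -> p != q -> q != c -> p != c ->
  cross (psub q p) (psub c p) != 0.
Proof. by case=> H _ hp hq hc h1 h2 h3; apply/eqP; apply: (H p q c). Qed.

Lemma far_edge V u p q d : genpos V -> u \in V -> p \in V -> q \in V ->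
  p != q -> p != u -> q != u ->
  ev (fun r => ray_crosses (padd u (pscale r d)) (p, q) = ray_crosses u (p, q) /\
               ~ on_seg p q (padd u (pscale r d))).
Proof.
move=> G hu hp hq hpq hpu hqu.
have hp2 : p.2 - u.2 != 0 by apply: (gp_y G); rewrite // eq_sym.
have hq2 : q.2 - u.2 != 0 by apply: (gp_y G); rewrite // eq_sym.
have hpq2 : q.2 - p.2 != 0 by apply: (gp_y G).
have hcol : cross (psub q p) (psub u p) != 0.
  by apply: (gp_col G) => //; rewrite eq_sym.
have e1 := @ev_sign1 R (fun r => p.2 - (u.2 + r * d.2)) (p.2 - u.2) (- d.2)
             (fun r => ltac:(ring)) hp2.
have e2 := @ev_sign1 R (fun r => q.2 - (u.2 + r * d.2)) (q.2 - u.2) (- d.2)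
             (fun r => ltac:(ring)) hq2.
set g0 := p.1 + (u.2 - p.2) * (q.1 - p.1) / (q.2 - p.2) - u.1.
have hg0 : g0 != 0.
  have : g0 * (q.2 - p.2) = cross (psub q p) (psub u p).
    rewrite /g0 /cross /=; field; exact: hpq2.
  by move=> e; move: hcol; rewrite -e mulf_eq0 negb_or => /andP[].
have e3 := @ev_sign1 R (fun r => p.1 + (u.2 + r * d.2 - p.2) * (q.1 - p.1) / (q.2 - p.2) - (u.1 + r * d.1))
             g0 (d.2 * (q.1 - p.1) / (q.2 - p.2) - d.1) (fun r => ltac:(rewrite /g0; ring)) hg0.
have e4 := @ev_neq0 R (fun r => cross (psub q p) (psub (padd u (pscale r d)) p))
             (cross (psub q p) (psub u p)) (cross (psub q p) d)
             (fun r => ltac:(rewrite /cross /=; ring)) hcol.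
have := ev_and (ev_and e1 e2) (ev_and e3 e4).
move=> hh; apply: (ev_mono hh) => r r0 [[h1 h2] [h3 h4]]; split.
- rewrite /ray_crosses /= -[_ < p.2]subr_gt0 -[_ < q.2]subr_gt0 -[_ < _ + _ / _]subr_gt0.
  rewrite h1 h2 h3 -[u.2 < p.2]subr_gt0 -[u.2 < q.2]subr_gt0 -[u.1 < _]subr_gt0.
  by rewrite /g0.
- case=> t [ht e]; move: h4; rewrite /= e /cross /=.
  set x := (_ - _ * _); suff -> : x = 0 by rewrite eqxx.
  rewrite /x; ring.
Qed.

Definition cX (A d : pt R) : bool :=
  ((d.2 < 0) != (0 < A.2)) &&
  (if 0 < A.2 then 0 < A.1 * d.2 - A.2 * d.1 else A.1 * d.2 - A.2 * d.1 < 0).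

Definition Rb (A d : pt R) : bool :=
  (A.1 * d.2 - A.2 * d.1 == 0) && (0 <= A.1 * d.1 + A.2 * d.2).

Lemma low_iff (u d : pt R) r : 0 < r -> ((u.2 + r * d.2) < u.2) = (d.2 < 0).
Proof. by move=> r0; rewrite -subr_lt0 addrAC subrr add0r pmulr_rlt0. Qed.

Lemma adjA u a d : (psub a u).2 != 0 ->
  ev (fun r => ray_crosses (padd u (pscale r d)) (u, a) = cX (psub a u) d).
Proof.
move=> hA.
have e1 := @ev_sign1 R (fun r => a.2 - (u.2 + r * d.2)) (a.2 - u.2) (- d.2)
             (fun r => ltac:(ring)) hA.
apply: (ev_mono e1) => r r0 h1.
rewrite /ray_crosses /cX /= low_iff // -[_ < a.2]subr_gt0 h1.
congr (_ && _).
have -> : u.1 + (u.2 + r * d.2 - u.2) * (a.1 - u.1) / (a.2 - u.2) =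
  u.1 + r * (d.2 * (a.1 - u.1) / (a.2 - u.2)) by ring.
rewrite ltrD2l ltr_pM2l // divcmp //.
Qed.

Lemma adjB u b d : (psub b u).2 != 0 ->
  ev (fun r => ray_crosses (padd u (pscale r d)) (b, u) = cX (psub b u) d).
Proof.
move=> hB.
have e1 := @ev_sign1 R (fun r => b.2 - (u.2 + r * d.2)) (b.2 - u.2) (- d.2)
             (fun r => ltac:(ring)) hB.
apply: (ev_mono e1) => r r0 h1.
rewrite /ray_crosses /cX /= low_iff // -[_ < b.2]subr_gt0 h1 eq_sym.
congr (_ && _).
have hB' : u.2 - b.2 != 0 by rewrite -oppr_eq0 opprB.
have -> : b.1 + (u.2 + r * d.2 - b.2) * (u.1 - b.1) / (u.2 - b.2) =
          u.1 + r * (d.2 * (b.1 - u.1) / (b.2 - u.2)).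
  by field; rewrite hB hB'.
by rewrite ltrD2l ltr_pM2l // divcmp.
Qed.

Lemma on_seg_sym p q z : on_seg p q z -> on_seg q p z.
Proof.
case=> t [/andP[t0 t1] ->]; exists (1 - t); split.
  by rewrite subr_ge0 t1 /= lerBlDr lerDl.
rewrite /padd /pscale /psub /=; congr (_, _); ring.
Qed.

Lemma seg_ev u a d : (psub a u).2 != 0 ->
  ev (fun r => on_seg u a (padd u (pscale r d)) <-> Rb (psub a u) d).
Proof.
move=> hA.
set A := psub a u.
have hA2 : 0 < A.1 ^+ 2 + A.2 ^+ 2.
  have : 0 < A.2 ^+ 2 by case: (ltrgtP 0 A.2) hA => // h _; nra.
  nra.
case hR: (Rb A d); last first.
  apply: ev_true => r r0; split => // -[t [/andP[t0 t1] e]].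
  move: hR; rewrite /Rb.
  have e1 : r * d.1 = t * A.1 by move: e => [e _]; rewrite /A /=; lra.
  have e2 : r * d.2 = t * A.2 by move: e => [_ e]; rewrite /A /=; lra.
  have hz : r * (A.1 * d.2 - A.2 * d.1) = 0.
    have -> : r * (A.1 * d.2 - A.2 * d.1) = A.1 * (r * d.2) - A.2 * (r * d.1) by ring.
    rewrite e1 e2; ring.
  have -> : A.1 * d.2 - A.2 * d.1 = 0.
    by move/eqP: hz; rewrite mulf_eq0 (negbTE (lt0r_neq0 r0)) => /eqP.
  rewrite eqxx /=.
  have : 0 <= r * (A.1 * d.1 + A.2 * d.2).
    have -> : r * (A.1 * d.1 + A.2 * d.2) = A.1 * (r * d.1) + A.2 * (r * d.2) by ring.
    rewrite e1 e2; nra.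
  by rewrite pmulr_rge0 // => ->.
move: hR; rewrite /Rb => /andP[/eqP hc hd].
set l := (A.1 * d.1 + A.2 * d.2) / (A.1 ^+ 2 + A.2 ^+ 2).
have hl : 0 <= l by rewrite /l divr_ge0 // ltW.
have h : A.1 * d.2 = A.2 * d.1 by apply/eqP; rewrite -subr_eq0 hc.
have hA0 : A.1 ^+ 2 + A.2 ^+ 2 != 0 by rewrite lt0r_neq0.
have hd1 : d.1 = l * A.1.
  have key : d.1 * (A.1 ^+ 2 + A.2 ^+ 2) = (A.1 * d.1 + A.2 * d.2) * A.1.
    apply/eqP; rewrite -subr_eq0; apply/eqP.
    have -> : d.1 * (A.1 ^+ 2 + A.2 ^+ 2) - (A.1 * d.1 + A.2 * d.2) * A.1 =
              A.2 * (A.2 * d.1 - A.1 * d.2) by ring.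
    by rewrite h subrr mulr0.
  by rewrite /l mulrAC -key mulfK.
have hd2 : d.2 = l * A.2.
  have key : d.2 * (A.1 ^+ 2 + A.2 ^+ 2) = (A.1 * d.1 + A.2 * d.2) * A.2.
    apply/eqP; rewrite -subr_eq0; apply/eqP.
    have -> : d.2 * (A.1 ^+ 2 + A.2 ^+ 2) - (A.1 * d.1 + A.2 * d.2) * A.2 =
              A.1 * (A.1 * d.2 - A.2 * d.1) by ring.
    by rewrite h subrr mulr0.
  by rewrite /l mulrAC -key mulfK.
exists (1 / (l + 1)); first by rewrite divr_gt0 // ltr_wpDl.
move=> r r0; rewrite ler_pdivlMr ?ltr_wpDl // => hr; split => // _.
exists (r * l); split.
  apply/andP; split; first by rewrite mulr_ge0 // ltW.
  nra.
rewrite /padd /pscale /= hd1 hd2 /A /=; congr (_, _); ring.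
Qed.

Lemma pedges_dec u a t0 b :
  pedges (u :: a :: rcons t0 b) = (u, a) :: rcons (zip (a :: t0) (rcons t0 b)) (b, u).
Proof.
rewrite /pedges rot1_cons /= -rcons_cons zip_rcons //.
by rewrite /= size_rcons.
Qed.

Lemma mid_edges (T : eqType) (l : seq T) x y e :
  uniq (x :: rcons l y) -> e \in zip (x :: l) (rcons l y) ->
  [/\ e.1 != e.2, e.1 \in x :: rcons l y & e.2 \in x :: rcons l y].
Proof.
elim: l x => [|h l IH] x /=.
  move=> /andP[hx _]; rewrite mem_seq1 => /eqP -> /=.
  split; [by move: hx; rewrite mem_seq1 | by rewrite inE eqxx | by rewrite !inE eqxx orbT].
move=> /andP[hx hu]; rewrite inE => /orP[/eqP -> /=|he].
  split => /=; [apply: contraNneq hx => ->; by rewrite inE eqxx | by rewrite inE eqxx |].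
  by rewrite in_cons mem_head orbT.
have [h1 h2 h3] := IH h hu he.
split => //; [by rewrite h2 orbT | by rewrite in_cons h3 orbT].
Qed.

End Geo2.

Section Geo3.
Variable R : rcfType.
Implicit Types (u a b p q d : pt R).

Lemma interior_shape V u a t0 b d : genpos V -> uniq (u :: a :: rcons t0 b) ->
  {subset (u :: a :: rcons t0 b) <= V} ->
  ev (fun r => poly_interior (u :: a :: rcons t0 b) (padd u (pscale r d)) <->
     ~~ (Rb (psub a u) d || Rb (psub b u) d) &&
     (odd (count (ray_crosses u) (zip (a :: t0) (rcons t0 b))) (+) cX (psub a u) d (+) cX (psub b u) d)).
Proof.
move=> G hU hV.
have hu : u \in V by apply: hV; rewrite mem_head.
have ha : a \in V by apply: hV; rewrite !inE eqxx orbT.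
have hb : b \in V by apply: hV; rewrite !inE mem_rcons mem_head !orbT.
move: (hU) => /= /andP[hun /andP[han hU']].
have hua : u != a by apply: contraNneq hun => ->; rewrite mem_head.
have hub : u != b by apply: contraNneq hun => ->; rewrite in_cons mem_rcons mem_head orbT.
have hA : (psub a u).2 != 0 by exact: (gp_y G hu ha hua).
have hB : (psub b u).2 != 0 by exact: (gp_y G hu hb hub).
set M := zip (a :: t0) (rcons t0 b).
have Ef : ev (fun r => forall e, e \in M ->
    ray_crosses (padd u (pscale r d)) e = ray_crosses u e /\
    ~ on_seg e.1 e.2 (padd u (pscale r d))).
  apply: ev_all => -[p q] he.
  have [h1 h2 h3] := mid_edges (andb_true_intro (conj han hU')) he.
  rewrite /= in h1 h2 h3.
  have hpV : p \in V by apply: hV; rewrite in_cons h2 orbT.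
  have hqV : q \in V by apply: hV; rewrite in_cons h3 orbT.
  have hpu : p != u by rewrite eq_sym; apply: contraNneq hun => ->.
  have hqu : q != u by rewrite eq_sym; apply: contraNneq hun => ->.
  exact: (far_edge d G hu hpV hqV h1 hpu hqu).
have := ev_and (ev_and Ef (ev_and (adjA d hA) (adjB d hB))) (ev_and (seg_ev d hA) (seg_ev d hB)).
move=> hh; apply: (ev_mono hh) => r r0 [[hf [ea eb]] [sa sb]].
set z := padd u (pscale r d).
have hbd : on_boundary (u :: a :: rcons t0 b) z <-> Rb (psub a u) d || Rb (psub b u) d.
  rewrite /on_boundary pedges_dec; split.
  - case=> e; rewrite in_cons => /orP[/eqP -> /= hs|].
      by apply/orP; left; apply/sa.
    rewrite -cats1 mem_cat => /orP[he hs|].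
      by case: (hf e he).
    rewrite mem_seq1 => /eqP -> /= hs.
    by apply/orP; right; apply/sb; apply: on_seg_sym.
  - case/orP => h.
      by exists (u, a); [rewrite mem_head | apply/sa].
    exists (b, u); first by rewrite in_cons mem_rcons mem_head orbT.
    by apply: on_seg_sym; apply/sb.
have hcnt : count (ray_crosses z) (pedges (u :: a :: rcons t0 b)) =
    (cX (psub a u) d + count (ray_crosses u) M + cX (psub b u) d)%N.
  rewrite pedges_dec /= -cats1 count_cat /= ea eb addn0 addnA.
  congr (_ + _ + _)%N; apply: eq_in_count => e he; exact: (hf e he).1.
rewrite /poly_interior hcnt !oddD !oddb.
split.
- case=> h1 h2; apply/andP; split.
    by apply/negP => h; apply: h1; apply/hbd.
  by move: h2; rewrite [X in X (+) _]addbC.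
- case/andP => h1 h2; split.
    by move/hbd => h; rewrite h in h1.
  by move: h2; rewrite [X in X (+) _]addbC.
Qed.


Definition Wl (F1 F2 : pt R) (conv : bool) (d : pt R) : Prop :=
  if conv then 0 < dot F1 d /\ 0 < dot F2 d else ~ (0 <= dot F1 d /\ 0 <= dot F2 d).

Lemma ev_iff (P : R -> Prop) (Q : Prop) : ev (fun r => P r <-> Q) -> (ev P <-> Q).
Proof.
move=> H; split => [HP|HQ].
- by apply: ev_const; apply: (ev_mono (ev_and H HP)) => r _ [h1 h2]; apply/h1.
- by apply: (ev_mono H) => r _ h; apply/h.
Qed.

Lemma Wl_arc (a1 a2 b1 b2 : R) (c : bool) :
  exists F1 F2 conv, forall d : pt R, Wl F1 F2 conv d <->
   (if ~~ (c (+) (((0 < a2) != (0 < b2)) && ((0 < a1 * b2 - a2 * b1) == (0 < b2))))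
    then (if 0 < a1 * b2 - a2 * b1 then (0 < a1 * d.2 - a2 * d.1) && (0 < d.1 * b2 - d.2 * b1)
          else (a1 * d.2 - a2 * d.1 < 0) && (d.1 * b2 - d.2 * b1 < 0))
    else ~~ (if 0 < a1 * b2 - a2 * b1 then (0 <= a1 * d.2 - a2 * d.1) && (0 <= d.1 * b2 - d.2 * b1)
             else (a1 * d.2 - a2 * d.1 <= 0) && (d.1 * b2 - d.2 * b1 <= 0))).
Proof.
set conv := ~~ _.
case hs: (0 < a1 * b2 - a2 * b1).
- exists (- a2, a1), (b2, - b1), conv => d; rewrite /Wl.
  have -> : dot (- a2, a1) d = a1 * d.2 - a2 * d.1 by rewrite /dot /=; ring.
  have -> : dot (b2, - b1) d = d.1 * b2 - d.2 * b1 by rewrite /dot /=; ring.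
  case: conv.
  + by split => [[-> ->]|/andP].
  + by split => [h|/negP h [h1 h2]]; [apply/negP => /andP | apply: h; rewrite h1 h2].
- exists (a2, - a1), (- b2, b1), conv => d; rewrite /Wl.
  have -> : dot (a2, - a1) d = - (a1 * d.2 - a2 * d.1) by rewrite /dot /=; ring.
  have -> : dot (- b2, b1) d = - (d.1 * b2 - d.2 * b1) by rewrite /dot /=; ring.
  rewrite !oppr_gt0 !oppr_ge0; case: conv.
  + by split => [[-> ->]|/andP].
  + by split => [h|/negP h [h1 h2]]; [apply/negP => /andP | apply: h; rewrite h1 h2].
Qed.

Lemma local_char V P u : genpos V -> uniq P -> (3 <= size P)%N -> {subset P <= V} -> u \in P ->
  exists F1 F2 conv, forall d, ev (fun r => poly_interior P (padd u (pscale r d))) <-> Wl F1 F2 conv d.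
Proof.
move=> G hU hs hV hu.
have := rot_index hu; set P' := rot _ P => hP'.
have hU' : uniq P' by rewrite rot_uniq.
have hV' : {subset P' <= V} by move=> x; rewrite mem_rot; apply: hV.
have hs' : (3 <= size P')%N by rewrite size_rot.
suff [F1 [F2 [conv H]]] : exists F1 F2 conv, forall d,
    ev (fun r => poly_interior P' (padd u (pscale r d))) <-> Wl F1 F2 conv d.
  exists F1, F2, conv => d; split => h.
  - by apply/H; apply: (ev_mono h) => r _ h'; rewrite /P'; apply/interior_rot.
  - have h2 := proj2 (H d) h; apply: (ev_mono h2) => r _ h'.
    by move: h'; rewrite /P' => /interior_rot.
rewrite hP' in hU' hV' hs' *.
move: hU' hV' hs'; set s := (drop _ _ ++ _).
case: s => [|a t] //; case/lastP: t => [|t0 b] // hU' hV' _.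
have hu' : u \in V by apply: hV'; rewrite mem_head.
have ha : a \in V by apply: hV'; rewrite !inE eqxx orbT.
have hb : b \in V by apply: hV'; rewrite !inE mem_rcons mem_head !orbT.
move: (hU') => /= /andP[hun /andP[han _]].
have hua : u != a by apply: contraNneq hun => ->; rewrite mem_head.
have hub : u != b by apply: contraNneq hun => ->; rewrite in_cons mem_rcons mem_head orbT.
have hab : a != b by apply: contraNneq han => ->; rewrite mem_rcons mem_head.
have hA : (psub a u).2 != 0 by exact: (gp_y G hu' ha hua).
have hB : (psub b u).2 != 0 by exact: (gp_y G hu' hb hub).
have hAB : cross (psub a u) (psub b u) != 0 by exact: (gp_col G hu' ha hb hua hab hub).
set c0 := odd (count (ray_crosses u) (zip (a :: t0) (rcons t0 b))).
have [F1 [F2 [conv HW]]] := Wl_arc (psub a u).1 (psub a u).2 (psub b u).1 (psub b u).2 c0.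
exists F1, F2, conv => d.
rewrite (ev_iff (interior_shape d G hU' hV')) HW.
rewrite /Rb /cX -/c0.
by rewrite (arc_bool d.1 d.2 c0 hA hB hAB).
Qed.

End Geo3.

Section Cone.
Variable R : rcfType.

Lemma s3_sq : s3 R ^+ 2 = 3.
Proof. by rewrite /s3 sqr_sqrtr // ler0n. Qed.

Lemma s3_gt0 : 0 < s3 R.
Proof. by rewrite /s3 sqrtr_gt0 ltr0n. Qed.

Definition L1 (k : nat) : pt R :=
  match k with
  | 0 => (- s3 R, 1) | 1 => (0, 1) | 2 => (0, -1) | 3 => (s3 R, -1) | 4 => (0, -1) | _ => (0, 1)
  end.
Definition L2 (k : nat) : pt R :=
  match k with
  | 0 => (s3 R, 1) | 1 => (- s3 R, -1) | 2 => (- s3 R, 1) | 3 => (- s3 R, -1) | 4 => (s3 R, 1)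
  | _ => (s3 R, -1)
  end.

Definition Lin (k : nat) (d : pt R) : Prop := 0 < dot (L1 k) d /\ 0 < dot (L2 k) d.

Definition gdir (d : pt R) : Prop :=
  [/\ d.2 != 0, d.2 != s3 R * d.1 & d.2 != - (s3 R * d.1)].

Lemma in_cone_Lin k d : (k < 6)%N -> gdir d -> in_cone k d -> Lin k d.
Proof.
have h3 := s3_sq; have h0 := s3_gt0.
case: d => d1 d2; rewrite /gdir /in_cone /Lin /dot /= => hk [n1 n2 n3].
have q1 : d2 - s3 R * d1 != 0 by apply: contraNneq n2 => /eqP; rewrite subr_eq0.
have q2 : d2 + s3 R * d1 != 0 by apply: contraNneq n3 => /eqP; rewrite addr_eq0.
case: k hk => [|[|[|[|[|[|k]]]]]] hk //=;
move: (s3 R) h3 h0 q1 q2 => s h3 h0 q1 q2 /andP[h1 h2];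
have := q1; have := q2; have := n1;
case: (ltrgtP 0 d2) => // hd2 _;
case: (ltrgtP 0 (d2 - s * d1)) => // ha _;
case: (ltrgtP 0 (d2 + s * d1)) => // hb _; split; nra.
Qed.

End Cone.

Section Cone2.
Variable R : rcfType.
Implicit Types (d x y : pt R).

Lemma Lin_in_cone k d : (k < 6)%N -> Lin k d -> in_cone k d.
Proof.
have h3 := @s3_sq R; have h0 := @s3_gt0 R.
case: d => d1 d2; rewrite /in_cone /Lin /dot /=.
case: k => [|[|[|[|[|[|k]]]]]] hk //=;
move: (s3 R) h3 h0 => s h3 h0 [h1 h2]; apply/andP; split; nra.
Qed.

Lemma Lin_exists d : gdir d -> exists2 k, (k < 6)%N & Lin k d.
Proof.
have h3 := @s3_sq R; have h0 := @s3_gt0 R.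
case: d => d1 d2; rewrite /gdir /Lin /dot /= => -[n1 n2 n3].
have q1 : d2 - s3 R * d1 != 0 by apply: contraNneq n2 => /eqP; rewrite subr_eq0.
have q2 : d2 + s3 R * d1 != 0 by apply: contraNneq n3 => /eqP; rewrite addr_eq0.
have := q1; have := q2; have := n1.
case: (ltrgtP 0 d2) => // hd2 _;
case: (ltrgtP 0 (d2 - s3 R * d1)) => // ha _;
case: (ltrgtP 0 (d2 + s3 R * d1)) => // hb _.
all: first [ by exists 0%N => //=; split; nra | by exists 1%N => //=; split; nra | by exists 2%N => //=; split; nra | by exists 3%N => //=; split; nra | by exists 4%N => //=; split; nra | by exists 5%N => //=; split; nra | exfalso; nra].
Qed.

Lemma Lin_uniq k k' d : (k < 6)%N -> (k' < 6)%N -> Lin k d -> Lin k' d -> k = k'.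
Proof.
case: d => d1 d2; rewrite /Lin /dot /=.
case: k => [|[|[|[|[|[|k]]]]]] //; case: k' => [|[|[|[|[|[|k']]]]]] //= _ _;
move: (s3 R) => s [h1 h2] [h3 h4]; first [reflexivity | exfalso; nra].
Qed.

Lemma Lin_opp k k' d : (k < 6)%N -> (k' < 6)%N -> Lin k d -> Lin k' (- d.1, - d.2) ->
  positive_cone k' = ~~ positive_cone k.
Proof.
case: d => d1 d2; rewrite /Lin /dot /=.
case: k => [|[|[|[|[|[|k]]]]]] //; case: k' => [|[|[|[|[|[|k']]]]]] //= _ _;
move: (s3 R) => s [h1 h2] [h3 h4]; first [reflexivity | exfalso; nra].
Qed.

Lemma dot_comb F s t x y :
  dot F (padd (pscale s x) (pscale t y)) = s * dot F x + t * dot F y.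
Proof. rewrite /dot /=; ring. Qed.

Lemma LinD k s t x y : Lin k x -> Lin k y -> 0 <= s -> 0 <= t -> 0 < s + t ->
  Lin k (padd (pscale s x) (pscale t y)).
Proof.
rewrite /Lin !dot_comb => -[a1 a2] [b1 b2] hs ht hst.
case: (ltrgtP 0 s) hs => // hs' _.
- split; nra.
- rewrite -hs' mul0r !add0r; rewrite -hs' add0r in hst; split; nra.
Qed.

Lemma cone_idx_spec (u v : pt R) : gdir (psub v u) ->
  (cone_idx u v < 6)%N /\ Lin (cone_idx u v) (psub v u).
Proof.
move=> g; have [k hk hL] := Lin_exists g.
have hin : in_cone k (psub v u) := Lin_in_cone hk hL.
have hh : has (fun k => in_cone k (psub v u)) (iota 0 6).
  by apply/hasP; exists k => //; rewrite mem_iota.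
have hlt : (cone_idx u v < 6)%N by rewrite /cone_idx -{2}(size_iota 0 6) -has_find.
split => //; apply: in_cone_Lin => //.
have := nth_find 0 hh; rewrite nth_iota //.
Qed.

End Cone2.

Section Q.
Variable R : rcfType.
Implicit Types (x y : pt R).

Definition comb (s t : R) x y := padd (pscale s x) (pscale t y).

Lemma Q1 (F1 F2 : pt R) conv x y s t : ~ Wl F1 F2 conv x -> ~ Wl F1 F2 conv y ->
  (dot F1 x <= 0) = (dot F1 y <= 0) -> 0 <= s -> 0 <= t ->
  ~ Wl F1 F2 conv (comb s t x y).
Proof.
rewrite /Wl /comb !dot_comb; case: conv => hx hy hl hs ht.
- case=> h1 h2.
  case hx1: (dot F1 x <= 0).
  + have hy1 : dot F1 y <= 0 by rewrite -hl.
    nra.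
  + have hy1 : 0 < dot F1 y by rewrite ltNge -hl hx1.
    have hx1' : 0 < dot F1 x by rewrite ltNge hx1.
    have hx2 : dot F2 x <= 0 by rewrite leNgt; apply/negP => h; apply: hx.
    have hy2 : dot F2 y <= 0 by rewrite leNgt; apply/negP => h; apply: hy.
    nra.
- move=> H; apply: H.
  have [hx1 hx2] : 0 <= dot F1 x /\ 0 <= dot F2 x.
    case: (lerP 0 (dot F1 x)) => a; case: (lerP 0 (dot F2 x)) => b //;
    by exfalso; apply: hx => -[]; lra.
  have [hy1 hy2] : 0 <= dot F1 y /\ 0 <= dot F2 y.
    case: (lerP 0 (dot F1 y)) => a; case: (lerP 0 (dot F2 y)) => b //;
    by exfalso; apply: hy => -[]; lra.
  split; nra.
Qed.

Lemma Q0 (F1 F2 : pt R) x y s t : ~ Wl F1 F2 false x -> ~ Wl F1 F2 false y ->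
  0 <= s -> 0 <= t -> ~ Wl F1 F2 false (comb s t x y).
Proof.
rewrite /Wl /comb !dot_comb => hx hy hs ht H; apply: H.
have [hx1 hx2] : 0 <= dot F1 x /\ 0 <= dot F2 x.
  case: (lerP 0 (dot F1 x)) => a; case: (lerP 0 (dot F2 x)) => b //;
  by exfalso; apply: hx => -[]; lra.
have [hy1 hy2] : 0 <= dot F1 y /\ 0 <= dot F2 y.
  case: (lerP 0 (dot F1 y)) => a; case: (lerP 0 (dot F2 y)) => b //;
  by exfalso; apply: hy => -[]; lra.
split; nra.
Qed.

Lemma prod_pos (x y : R) : 0 <= x -> 0 < x * y -> 0 < x /\ 0 < y.
Proof.
move=> hx hxy; case: (ltrgtP 0 x) hx => // h _.
- by split => //; rewrite -(pmulr_rgt0 _ h).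
- by move: hxy; rewrite -h mul0r ltxx.
Qed.

Lemma mat22 (m11 m12 m21 m22 s t a b : R) :
  (m11 <= 0 \/ m21 <= 0) -> (m12 <= 0 \/ m22 <= 0) -> 0 <= s -> 0 <= t ->
  0 < s * m11 + t * m12 -> 0 < s * m21 + t * m22 ->
  0 < a * m11 + b * m12 -> 0 < a * m21 + b * m22 -> 0 <= a /\ 0 <= b.
Proof.
move=> [h1|h1] [h2|h2] hs ht e1 e2 e3 e4.
- exfalso; nra.
- have [ht' hm12] : 0 < t /\ 0 < m12 by apply: prod_pos => //; nra.
  have [hs' hm21] : 0 < s /\ 0 < m21 by apply: prod_pos => //; nra.
  suff ha : 0 <= a.
    split => //; rewrite leNgt; apply/negP => hb; nra.
  rewrite leNgt; apply/negP => ha.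
  have hb' : b < 0.
    rewrite ltNge; apply/negP => hb'; nra.
  have k1 : (s * (- m11)) * (t * (- m22)) < (t * m12) * (s * m21).
    apply: ltr_pM; nra.
  have k2 : (b * (- m12)) * (a * (- m21)) < (a * m11) * (b * m22).
    apply: ltr_pM; nra.
  have hst : 0 < s * t by nra.
  have hab : 0 < a * b by nra.
  have k1' : s * t * (m11 * m22) < s * t * (m12 * m21).
    by move: k1; congr (_ < _); ring.
  have k2' : a * b * (m12 * m21) < a * b * (m11 * m22).
    by move: k2; congr (_ < _); ring.
  rewrite ltr_pM2l // in k1'; rewrite ltr_pM2l // in k2'.
  by move: (lt_trans k1' k2'); rewrite ltxx.
- have [hs' hm11] : 0 < s /\ 0 < m11 by apply: prod_pos => //; nra.
  have [ht' hm22] : 0 < t /\ 0 < m22 by apply: prod_pos => //; nra.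
  suff ha : 0 <= a.
    split => //; rewrite leNgt; apply/negP => hb; nra.
  rewrite leNgt; apply/negP => ha.
  have hb' : b < 0.
    rewrite ltNge; apply/negP => hb'; nra.
  have k1 : (t * (- m12)) * (s * (- m21)) < (s * m11) * (t * m22).
    apply: ltr_pM; nra.
  have k2 : (a * (- m11)) * (b * (- m22)) < (b * m12) * (a * m21).
    apply: ltr_pM; nra.
  have hst : 0 < s * t by nra.
  have hab : 0 < a * b by nra.
  have k1' : s * t * (m12 * m21) < s * t * (m11 * m22).
    by move: k1; congr (_ < _); ring.
  have k2' : a * b * (m11 * m22) < a * b * (m12 * m21).
    by move: k2; congr (_ < _); ring.
  rewrite ltr_pM2l // in k1'; rewrite ltr_pM2l // in k2'.
  by move: (lt_trans k1' k2'); rewrite ltxx.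
- exfalso; nra.
Qed.

End Q.

Section Q2.
Variable R : rcfType.
Implicit Types (x y : pt R).

Lemma pos_comb (a b X Y : R) : 0 <= a -> 0 <= b -> 0 < a + b -> 0 < X -> 0 < Y -> 0 < a * X + b * Y.
Proof.
move=> ha hb hab hX hY; case: (ltrgtP 0 a) ha => // h _.
- nra.
- rewrite -h mul0r add0r; rewrite -h add0r in hab; nra.
Qed.

Lemma id_cross (F x3 x4 p : pt R) :
  cross x3 x4 * dot F p = cross p x4 * dot F x3 + cross x3 p * dot F x4.
Proof. rewrite /cross /dot; ring. Qed.

Lemma Q2 (F1 F2 : pt R) conv k k' x1 x2 x3 x4 s t s' t' :
  (k < 6)%N -> (k' < 6)%N -> Lin k x1 -> Lin k x2 -> Lin k' x3 -> Lin k' x4 ->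
  ~ Wl F1 F2 conv x1 -> ~ Wl F1 F2 conv x2 -> ~ Wl F1 F2 conv x3 -> ~ Wl F1 F2 conv x4 ->
  cross x3 x4 != 0 -> 0 <= s -> 0 <= t -> 0 <= s' -> 0 <= t' ->
  Wl F1 F2 conv (comb s t x1 x2) -> Wl F1 F2 conv (comb s' t' x3 x4) -> k = k'.
Proof.
move=> hk hk' l1 l2 l3 l4 w1 w2 w3 w4 hc hs ht hs' ht' W12 W34.
case: conv w1 w2 w3 w4 W12 W34 => w1 w2 w3 w4 W12 W34; last first.
  by exfalso; apply: (Q0 w1 w2 hs ht).
set p := comb s t x1 x2.
have [f1p f2p] : 0 < dot F1 p /\ 0 < dot F2 p by [].
have hst : 0 < s + t.
  rewrite ltNge; apply/negP => h.
  have [h5 h6] : s = 0 /\ t = 0 by split; lra.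
  by move: f1p; rewrite /p /comb dot_comb h5 h6 !mul0r addr0 ltxx.
have hLp : Lin k p by apply: LinD.
have [e1 e2] : 0 < s' * dot F1 x3 + t' * dot F1 x4 /\ 0 < s' * dot F2 x3 + t' * dot F2 x4.
  by move: W34; rewrite /Wl /comb !dot_comb.
have n3 : dot F1 x3 <= 0 \/ dot F2 x3 <= 0.
  case: (lerP (dot F1 x3) 0) => a; [by left | case: (lerP (dot F2 x3) 0) => b; [by right|]].
  by exfalso; apply: w3.
have n4 : dot F1 x4 <= 0 \/ dot F2 x4 <= 0.
  case: (lerP (dot F1 x4) 0) => a; [by left | case: (lerP (dot F2 x4) 0) => b; [by right|]].
  by exfalso; apply: w4.
have i1 := id_cross F1 x3 x4 p; have i2 := id_cross F2 x3 x4 p.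
suff hL' : Lin k' p by apply: (Lin_uniq hk hk' hLp hL').
have [hl1 hl2] := l3; have [hl3 hl4] := l4.
have j1 := id_cross (L1 R k') x3 x4 p; have j2 := id_cross (L2 R k') x3 x4 p.
case: (ltrgtP 0 (cross x3 x4)) hc => // hcp _.
- have [ha hb] : 0 <= cross p x4 /\ 0 <= cross x3 p.
    apply: (mat22 n3 n4 hs' ht' e1 e2); rewrite -?i1 -?i2; exact: mulr_gt0.
  have hab : 0 < cross p x4 + cross x3 p.
    rewrite lt_def addr_ge0 // andbT; apply/negP => /eqP h0.
    have [h5 h6] : cross p x4 = 0 /\ cross x3 p = 0 by split; lra.
    by move: i1; rewrite h5 h6 !mul0r addr0 => /eqP; rewrite mulf_eq0 (gt_eqF hcp) (gt_eqF f1p).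
  split; rewrite -(pmulr_rgt0 _ hcp).
  + by rewrite j1; apply: pos_comb.
  + by rewrite j2; apply: pos_comb.
- have [ha hb] : 0 <= - cross p x4 /\ 0 <= - cross x3 p.
    apply: (mat22 n3 n4 hs' ht' e1 e2).
    + have : 0 < - (cross x3 x4 * dot F1 p) by rewrite oppr_gt0 pmulr_llt0.
      by rewrite i1; congr (0 < _); ring.
    + have : 0 < - (cross x3 x4 * dot F2 p) by rewrite oppr_gt0 pmulr_llt0.
      by rewrite i2; congr (0 < _); ring.
  have hab : 0 < - cross p x4 + - cross x3 p.
    rewrite lt_def addr_ge0 // andbT; apply/negP => /eqP h0.
    have [h5 h6] : cross p x4 = 0 /\ cross x3 p = 0 by split; lra.
    by move: i1; rewrite h5 h6 !mul0r addr0 => /eqP; rewrite mulf_eq0 (lt_eqF hcp) (gt_eqF f1p).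
  have ncp : 0 < - cross x3 x4 by rewrite oppr_gt0.
  split; rewrite -(pmulr_rgt0 _ ncp).
  + have -> : - cross x3 x4 * dot (L1 R k') p = - cross p x4 * dot (L1 R k') x3 + - cross x3 p * dot (L1 R k') x4.
      by rewrite !mulNr j1 opprD.
    by apply: pos_comb.
  + have -> : - cross x3 x4 * dot (L2 R k') p = - cross p x4 * dot (L2 R k') x3 + - cross x3 p * dot (L2 R k') x4.
      by rewrite !mulNr j2 opprD.
    by apply: pos_comb.
Qed.

End Q2.

Lemma count_slots (T : eqType) (n : nat) (X : seq T) (P : nat -> T -> Prop) :
  uniq X -> (forall x, x \in X -> exists2 i, (i < n)%N & P i x) ->
  (forall i x y, x \in X -> y \in X -> P i x -> P i y -> x = y) -> (size X <= n)%N.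
Proof.
elim: n X => [|n IH] X hU hS hI.
  case: X hU hS hI => [|x X] // _ hS _; have [i] := hS x (mem_head _ _); by [].
case: (classic (exists2 x0, x0 \in X & P n x0)) => [[x0 hx0 hP]|hN].
- have hs : size X = (size (rem x0 X)).+1.
    by rewrite size_rem // prednK //; case: (X) hx0.
  rewrite hs ltnS; apply: IH; first exact: rem_uniq.
  + move=> x; rewrite (mem_rem_uniq _ hU) inE => /andP[hx hxX].
    have [i hi hPi] := hS x hxX; exists i => //.
    rewrite ltn_neqAle -ltnS hi andbT; apply/eqP => hin; subst i.
    by move/eqP: hx; apply; apply: (hI n x x0).
  + move=> i x y; rewrite !(mem_rem_uniq _ hU) !inE => /andP[_ hx] /andP[_ hy].
    exact: hI.
- apply: leq_trans (IH X hU _ _) _ => //.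
  move=> x hx; have [i hi hPi] := hS x hx; exists i => //.
  rewrite ltn_neqAle -ltnS hi andbT; apply/eqP => hin; subst i.
  by apply: hN; exists x.
Qed.

Section H.
Variable R : rcfType.
Implicit Types (u v w : pt R) (S : seq (seq (pt R))).

Lemma visible_sym S p q : visible S p q -> visible S q p.
Proof.
move=> H O hO t ht; have ht' : 0 <= 1 - t <= 1.
  by case/andP: ht => h1 h2; apply/andP; split; lra.
have := H O hO (1 - t) ht'.
have -> : padd q (pscale t (psub p q)) = padd p (pscale (1 - t) (psub q p)).
  by rewrite /padd /pscale /psub /=; congr (_, _); ring.
by [].
Qed.

Lemma obstacle_uniq S (O1 O2 : seq (pt R)) u : uniq (flatten S) -> O1 \in S -> O2 \in S ->
  u \in O1 -> u \in O2 -> O1 = O2.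
Proof.
elim: S => [|O S IH] //= hU; rewrite cat_uniq in hU; case/and3P: hU => h1 h2 h3.
rewrite !inE => /orP[/eqP->|h4] /orP[/eqP->|h5] hu1 hu2 //.
- exfalso; move/hasP: h2; apply; exists u => //.
  by apply/flattenP; exists O2.
- exfalso; move/hasP: h2; apply; exists u => //.
  by apply/flattenP; exists O1.
- exact: IH.
Qed.

Lemma bis_nz d k : gdir d -> dot d (bisector R k) != 0.
Proof.
case: d => d1 d2; rewrite /gdir /dot /= => -[n1 n2 n3].
case: k => [|[|[|[|[|k]]]]] /=.
- by rewrite mulr0 add0r mulr1.
- apply: contraNneq n2 => h; apply/eqP.
  have : d2 - s3 R * d1 = 2 * (d1 * - (s3 R / 2) + d2 * (1 / 2)) by field.
  rewrite h mulr0 => /eqP; rewrite subr_eq0 => /eqP.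
  by [].
- apply: contraNneq n3 => h; apply/eqP.
  have : d2 + s3 R * d1 = - 2 * (d1 * - (s3 R / 2) + d2 * - (1 / 2)) by field.
  rewrite h mulr0 => /eqP; rewrite addr_eq0 => /eqP.
  by [].
- by rewrite mulr0 add0r mulrN1 oppr_eq0.
- apply: contraNneq n2 => h; apply/eqP.
  have : d2 - s3 R * d1 = - 2 * (d1 * (s3 R / 2) + d2 * - (1 / 2)) by field.
  rewrite h mulr0 => /eqP; rewrite subr_eq0 => /eqP.
  by [].
- apply: contraNneq n3 => h; apply/eqP.
  have : d2 + s3 R * d1 = 2 * (d1 * (s3 R / 2) + d2 * (1 / 2)) by field.
  rewrite h mulr0 => /eqP; rewrite addr_eq0 => /eqP.
  by [].
Qed.

Lemma proj_inj V u v w k : genpos V -> v \in V -> w \in V -> v != w ->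
  proj u k v = proj u k w -> False.
Proof.
move=> [_ G] hv hw hvw e.
have [n1 n2 n3] := G w v hw hv ltac:(by rewrite eq_sym).
have E : dot (psub v w) (bisector R k) = proj u k v - proj u k w.
  by rewrite /proj /dot /psub /=; ring.
by move: (bis_nz k (And3 n1 n2 n3)); rewrite E e subrr eqxx.
Qed.

Lemma size_split (T : eqType) (s : seq T) (f : T -> nat) : (forall x, x \in s -> (f x < 6)%N) ->
  size s = (size [seq x <- s | f x == 0%N] + size [seq x <- s | f x == 1%N] +
            size [seq x <- s | f x == 2%N] + size [seq x <- s | f x == 3%N] +
            size [seq x <- s | f x == 4%N] + size [seq x <- s | f x == 5%N])%N.
Proof.
elim: s => [|x s IH] //= H.
rewrite IH; last by move=> y hy; apply: H; rewrite in_cons hy orbT.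
have := H x (mem_head _ _).
case: (f x) => [|[|[|[|[|[|n]]]]]] //= _; rewrite ?addSn ?addnS //.
Qed.

End H.

Section M1.
Variable R : rcfType.

Lemma SC (V : seq (pt R)) S u : setting V S -> u \in V ->
 exists F1 F2 conv,
  (forall v, visible S u v -> ~ Wl F1 F2 conv (psub v u)) /\
  (forall v w, same_subcone S u v w <->
     (cone_idx u v = cone_idx u w /\
      ~ exists s t, [/\ 0 <= s, 0 <= t & Wl F1 F2 conv (comb s t (psub v u) (psub w u))])).
Proof.
case=> hVu hO hdisj hflat [hcol hdir] hu.
have G : genpos V := conj hcol hdir.
case: (classic (exists2 O, O \in S & u \in O)) => [[O0 hO0 hu0]|hN].
- have [[h3 [hU _]] hsub] := hO O0 hO0.
  have [F1 [F2 [conv HC]]] := local_char G hU h3 hsub hu0.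
  exists F1, F2, conv; split.
  + move=> v hvis hW; have [eps he H] := proj2 (HC _) hW.
    have r0 : 0 < Num.min eps 1 by rewrite lt_min he ltr01.
    have r1 : Num.min eps 1 <= eps by rewrite ge_min lexx.
    have r2 : Num.min eps 1 <= 1 by rewrite ge_min lexx orbT.
    apply: (hvis O0 hO0 (Num.min eps 1)); first by rewrite (ltW r0) r2.
    exact: H.
  + move=> v w; rewrite /same_subcone; split.
    * case=> hc hn; split => // -[s [t [hs ht hW]]]; apply: hn; exists O0; split => //.
      exists s, t; split => //.
      have [eps he H] := proj2 (HC _) hW; exists eps => // r /andP[r0 re]; exact: H.
    * case=> hc hn; split => // -[O [hO' huO [s [t [hs ht [eps he H]]]]]].
      have eO := obstacle_uniq hflat hO' hO0 huO hu0; subst O.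
      apply: hn; exists s, t; split => //; apply/HC; exists eps => // r r0 re.
      by move: (H r); rewrite r0 re /comb; apply.
- have W0 : forall d : pt R, ~ Wl ((0, 0) : pt R) (0, 0) false d.
    move=> d; rewrite /Wl /= => H; apply: H.
    by rewrite /dot /= !mul0r addr0 lexx.
  exists (0, 0), (0, 0), false; split; first by move=> v _; apply: W0.
  move=> v w; rewrite /same_subcone; split.
  + case=> hc _; split => // -[s [t [_ _ hW]]]; exact: W0 hW.
  + case=> hc _; split => // -[O [hO' huO _]]; apply: hN; by exists O.
Qed.

End M1.

Unset Implicit Arguments. Set Strict Implicit.

Theorem lemma5 (R : rcfType) (V : seq (pt R)) (S : seq (seq (pt R)))
  (HS : setting V S) (u : pt R) (Hu : u \in V) (nb : seq (pt R)) :
  uniq nb -> (forall v, v \in nb -> G15_edge V S u v) -> (size nb <= 15)%N.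
Proof.
move=> hnb hG.
have [F1 [F2 [conv [HW HSS]]]] := SC HS Hu.
move: (HS) => [hVu hO hdisj hflat [hcol hdir]].
have G : genpos V := conj hcol hdir.
have NB : forall v, v \in nb -> [/\ v \in V, v != u & visible S u v].
  move=> v hv; have [hE _ _] := hG v hv.
  case: hE => -[h1 h2 h3 [h4 _] _].
  - by split.
  - by split => //; [rewrite eq_sym | apply: visible_sym].
have GD : forall a b, a \in V -> b \in V -> a != b -> gdir (psub b a).
  by move=> a b ha hb hab; have [n1 n2 n3] := hdir a b ha hb hab; split.
have CI : forall v, v \in V -> v != u -> (cone_idx u v < 6)%N /\ Lin (cone_idx u v) (psub v u).
  by move=> v hv hvu; apply: cone_idx_spec; apply: GD; rewrite // eq_sym.
have NW : forall v, v \in nb -> ~ Wl F1 F2 conv (psub v u).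
  by move=> v hv; apply: HW; case: (NB v hv).
pose wk k := if positive_cone k then 1%N else 3%N.
have CB : forall k (X : seq (pt R)), uniq X -> {subset X <= nb} ->
    (forall v, v \in X -> cone_idx u v = k) ->
    (forall v w, v \in X -> w \in X -> same_subcone S u v w) -> (size X <= wk k)%N.
  move=> k X hX hsub hk hss.
  rewrite /wk /=; case hpos: (positive_cone k).
  - have ADD : forall v, v \in X -> Ginf_adds V S u v.
      move=> v hv; have hvn := hsub v hv; have [hE _ _] := hG v hvn.
      case: hE => // hA; exfalso.
      case: hA => _ _ _ [_ hp] _.
      have [hvV hvu _] := NB v hvn.
      have [k1 l1] := CI v hvV hvu.
      have [k2 l2] := cone_idx_spec (GD v u hvV Hu hvu).
      have e : psub u v = (- (psub v u).1, - (psub v u).2).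
        by rewrite /psub /=; congr (_, _); ring.
      rewrite e in l2.
      by move: (Lin_opp k1 k2 l1 l2); rewrite hp (hk v hv) hpos.
    apply: (@count_slots _ 1 X (fun _ _ => True)) => //; first by move=> x _; exists 0%N.
    move=> _ v w hv hw _ _.
    case: (eqVneq v w) => // hvw; exfalso.
    have [_ _ _ _ Hv] := ADD v hv; have [_ _ _ _ Hw] := ADD w hw.
    have [hwV hwu hwvis] := NB w (hsub w hw); have [hvV hvu hvvis] := NB v (hsub v hv).
    have h1 := Hv w hwV hwu hwvis (hss v w hv hw).
    have h2 := Hw v hvV hvu hvvis (hss w v hw hv).
    rewrite (hk v hv) in h1; rewrite (hk w hw) in h2.
    by apply: (proj_inj (k := k) (u := u) G hvV hwV hvw); apply/eqP; rewrite eq_le h1 h2.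
  - pose N v z := Ginf_edge V S u z /\ same_subcone S u v z.
    pose P i v := match i with
                  | 0 => forall z, N v z -> 0 <= cross (psub v u) (psub z u)
                  | 1 => forall z, N v z -> cross (psub v u) (psub z u) <= 0
                  | _ => forall z, N v z -> proj u (cone_idx u v) v <= proj u (cone_idx u v) z
                  end.
    change (size X <= 3)%N; apply: (@count_slots _ 3 X P) => //.
    + move=> v hv; have [_ hk1 _] := hG v (hsub v hv).
      case: hk1 => [hp|[h|h|h]].
      * by move: hp; rewrite (hk v hv) hpos.
      * by exists 0%N.
      * by exists 1%N.
      * by exists 2%N.
    + move=> i v w hv hw Pv Pw.
      case: (eqVneq v w) => // hvw; exfalso.
      have [hwV hwu _] := NB w (hsub w hw); have [hvV hvu _] := NB v (hsub v hv).
      have Nvw : N v w by split; [case: (hG w (hsub w hw)) | apply: hss].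
      have Nwv : N w v by split; [case: (hG v (hsub v hv)) | apply: hss].
      have hcr : cross (psub w u) (psub v u) = - cross (psub v u) (psub w u).
        by rewrite /cross; ring.
      have col : cross (psub v u) (psub w u) = 0 -> False.
        by move=> h0; apply: (hcol u v w) => //; rewrite eq_sym.
      case: i Pv Pw => [|[|i]] /= Pv Pw.
      * have c1 := Pv w Nvw; have c2 := Pw v Nwv; rewrite hcr oppr_ge0 in c2.
        by apply: col; apply/eqP; rewrite eq_le c1 c2.
      * have c1 := Pv w Nvw; have c2 := Pw v Nwv; rewrite hcr oppr_le0 in c2.
        by apply: col; apply/eqP; rewrite eq_le c1 c2.
      * have c1 := Pv w Nvw; have c2 := Pw v Nwv.
        rewrite (hk v hv) in c1; rewrite (hk w hw) in c2.
        by apply: (proj_inj (k := k) (u := u) G hvV hwV hvw); apply/eqP; rewrite eq_le c1 c2.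
pose nbk k := [seq v <- nb | cone_idx u v == k].
have nbk_sub : forall k, {subset nbk k <= nb}.
  by move=> k v; rewrite mem_filter => /andP[].
have nbk_idx : forall k v, v \in nbk k -> cone_idx u v = k.
  by move=> k v; rewrite mem_filter => /andP[/eqP].
have nbk_uniq : forall k, uniq (nbk k) by move=> k; exact: filter_uniq.
have B2 : forall k, (size (nbk k) <= 2 * wk k)%N.
  move=> k; pose lab v := dot F1 (psub v u) <= 0.
  have e : size (nbk k) = (size (filter lab (nbk k)) + size (filter (predC lab) (nbk k)))%N.
    by rewrite (size_filter lab) (size_filter (predC lab)) count_predC.
  rewrite e mul2n -addnn leq_add //; apply: CB.
  - exact: filter_uniq.
  - by move=> v; rewrite (mem_filter lab) => /andP[_ /nbk_sub].
  - by move=> v; rewrite (mem_filter lab) => /andP[_ /nbk_idx].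
  - move=> v w; rewrite !(mem_filter lab) => /andP[lv hv] /andP[lw hw].
    apply/HSS; split; first by rewrite (nbk_idx _ _ hv) (nbk_idx _ _ hw).
    case=> s [t [hs ht hW]].
    by apply: (Q1 (NW v (nbk_sub _ _ hv)) (NW w (nbk_sub _ _ hw)) _ hs ht hW); rewrite -/(lab v) -/(lab w) lv lw.
  - exact: filter_uniq.
  - by move=> v; rewrite (mem_filter (predC lab)) => /andP[_ /nbk_sub].
  - by move=> v; rewrite (mem_filter (predC lab)) => /andP[_ /nbk_idx].
  - move=> v w; rewrite !(mem_filter (predC lab)) => /andP[lv hv] /andP[lw hw].
    apply/HSS; split; first by rewrite (nbk_idx _ _ hv) (nbk_idx _ _ hw).
    case=> s [t [hs ht hW]].
    apply: (Q1 (NW v (nbk_sub _ _ hv)) (NW w (nbk_sub _ _ hw)) _ hs ht hW).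
    by move: lv lw; rewrite /= /lab => /negbTE -> /negbTE ->.
pose bad k := exists v w, [/\ v \in nbk k, w \in nbk k & ~ same_subcone S u v w].
have WIT : forall k, bad k -> exists v w s t,
    [/\ v \in nbk k, w \in nbk k, v != w, 0 <= s /\ 0 <= t & Wl F1 F2 conv (comb s t (psub v u) (psub w u))].
  move=> k [v [w [hv hw hn]]].
  have : exists s t, [/\ 0 <= s, 0 <= t & Wl F1 F2 conv (comb s t (psub v u) (psub w u))].
    apply: NNPP => hne; apply: hn; apply/HSS; split => //.
    by rewrite (nbk_idx _ _ hv) (nbk_idx _ _ hw).
  case=> s [t [hs ht hW]]; exists v, w, s, t; split => //.
  apply/eqP => evw; subst w.
  exact: (Q1 (NW v (nbk_sub _ _ hv)) (NW v (nbk_sub _ _ hv)) (erefl _) hs ht hW).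
have U : forall k k', bad k -> bad k' -> k = k'.
  move=> k k' /WIT [v [w [s [t [hv hw hvw [hs ht] hW]]]]] /WIT [v' [w' [s' [t' [hv' hw' hvw' [hs' ht'] hW']]]]].
  have [vV vu _] := NB v (nbk_sub _ _ hv); have [wV wu _] := NB w (nbk_sub _ _ hw).
  have [vV' vu' _] := NB v' (nbk_sub _ _ hv'); have [wV' wu' _] := NB w' (nbk_sub _ _ hw').
  have [kv lv] := CI v vV vu; have [kw lw] := CI w wV wu.
  have [kv' lv'] := CI v' vV' vu'; have [kw' lw'] := CI w' wV' wu'.
  rewrite (nbk_idx _ _ hv) in kv lv; rewrite (nbk_idx _ _ hw) in kw lw.
  rewrite (nbk_idx _ _ hv') in kv' lv'; rewrite (nbk_idx _ _ hw') in kw' lw'.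
  have hc : cross (psub v' u) (psub w' u) != 0.
    by apply/eqP => h0; apply: (hcol u v' w') => //; rewrite eq_sym.
  exact: (Q2 kv kv' lv lw lv' lw' (NW v (nbk_sub _ _ hv)) (NW w (nbk_sub _ _ hw))
            (NW v' (nbk_sub _ _ hv')) (NW w' (nbk_sub _ _ hw')) hc hs ht hs' ht' hW hW').
have GOOD : forall k, ~ bad k -> (size (nbk k) <= wk k)%N.
  move=> k hnb'; apply: CB; [exact: nbk_uniq | exact: nbk_sub | exact: nbk_idx |].
  move=> v w hv hw; apply: NNPP => hn; apply: hnb'; by exists v, w.
have CIn : forall v, v \in nb -> (cone_idx u v < 6)%N.
  by move=> v hv; case: (NB v hv) => vV vu _; case: (CI v vV vu).
have SUM := size_split (f := cone_idx u) (s := nb) CIn.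
rewrite SUM -!/(nbk _).
case: (classic (exists k, bad k)) => [[k0 hb0]|hnone].
- have Hk : forall k, (size (nbk k) <= wk k + (if k == k0 then wk k else 0))%N.
    move=> k; case: eqP => [->|hne].
      by rewrite addnn -mul2n; apply: B2.
    rewrite addn0; apply: GOOD => hb; apply: hne; exact: U hb hb0.
  have k0lt : (k0 < 6)%N.
    case: hb0 => v [w [hv _ _]].
    have [vV vu _] := NB v (nbk_sub _ _ hv).
    by rewrite -(nbk_idx _ _ hv); case: (CI v vV vu).
  have h0 := Hk 0%N; have h1 := Hk 1%N; have h2 := Hk 2%N.
  have h3 := Hk 3%N; have h4 := Hk 4%N; have h5 := Hk 5%N.
  rewrite /wk /= in h0 h1 h2 h3 h4 h5.
  move: k0lt h0 h1 h2 h3 h4 h5; case: k0 {hb0 Hk} => [|[|[|[|[|[|k0]]]]]] //= _; move: (size (nbk 0)) (size (nbk 1)) (size (nbk 2)) (size (nbk 3)) (size (nbk 4)) (size (nbk 5)); move=> *; lia.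
- have Hk : forall k, (size (nbk k) <= wk k)%N.
    by move=> k; apply: GOOD => hb; apply: hnone; exists k.
  have h0 := Hk 0%N; have h1 := Hk 1%N; have h2 := Hk 2%N.
  have h3 := Hk 3%N; have h4 := Hk 4%N; have h5 := Hk 5%N.
  rewrite /wk /= in h0 h1 h2 h3 h4 h5.
  move: h0 h1 h2 h3 h4 h5; move: (size (nbk 0)) (size (nbk 1)) (size (nbk 2)) (size (nbk 3)) (size (nbk 4)) (size (nbk 5)); move=> *; lia.
Qed.
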